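(* Let $\mathcal{F}$ be a frame and $C_s,C_{cut},C_o\subseteq\mathcal{CH}$ such that $C_{cut}$ is an undirected cut between $C_s$ and $C_o$. If there is no disclosure between $C_s$ and $C_{cut}$, then there is no disclosure between $C_s$ and $C_o$.
   Context: A frame $\mathcal{F}$ consists of pairwise disjoint sets $\mathcal{LO}$ (locations), $\mathcal{CH}$ (channels), $\mathcal{D}$ (data). Each channel $c$ either has both a sender $\mathrm{sender}(c)\in\mathcal{LO}$ and recipient $\mathrm{recipient}(c)\in\mathcal{LO}$ (possibly equal), or neither; $\mathrm{chans}(\ell)=\{c:\mathrm{sender}(c)=\ell\text{ or }\mathrm{recipient}(c)=\ell\}$. Each location $\ell$ has a prefix-closed set $\mathrm{traces}(\ell)$ of finite or infinite sequences of labels $(c,v)$, $c\in\mathrm{chans}(\ell)$, $v\in\mathcal{D}$. Events come from a set $E$ with $\mathrm{chan}:E\to\mathcal{CH}$, $\mathrm{msg}:E\to\mathcal{D}$. A system of events $(B,\preceq)$ has $B\subseteq E$ and $\preceq$ a partial order with finitely many predecessors per event; it is an execution ($\in\mathrm{exec}(\mathcal{F})$) iff for every location $\ell$ the events whose channel has $\ell$ as sender or recipient are linearly ordered and, read as the sequence of labels $(\mathrm{chan}(e),\mathrm{msg}(e))$, lie in $\mathrm{traces}(\ell)$. For $C\subseteq\mathcal{CH}$, $\mathcal{B}|_C$ keeps events with channel in $C$ with the restricted order; $\mathrm{lruns}_C$ is the set of $\mathcal{A}|_C$, $\mathcal{A}\in\mathrm{exec}(\mathcal{F})$ ($C$-runs);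 $J_C^{C'}(\mathcal{B})=\{\mathcal{A}|_{C'}:\mathcal{A}\in\mathrm{exec}(\mathcal{F}),\ \mathcal{A}|_C=\mathcal{B}\}$. There is no disclosure from $C$ to $C'$ iff $J_C^{C'}(\mathcal{B})=\mathrm{lruns}_{C'}$ for every $C$-run $\mathcal{B}$; this relation is symmetric, and ''no disclosure between $C$ and $C'$'' means no disclosure from $C$ to $C'$. An undirected path is a sequence of locations $\ell_0,\dots,\ell_n$ and channels $c_1,\dots,c_n$ with each $c_k$ having endpoints $\ell_{k-1},\ell_k$ in some direction (the path traverses the $c_k$). $C_{cut}$ is an undirected cut between $C_s$ and $C_o$ iff $C_s,C_{cut},C_o$ are pairwise disjoint and every undirected path from an endpoint location of a channel in $C_o$ to an endpoint location of a channel in $C_s$ traverses some channel in $C_{cut}$. *)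

(* Defs.v *)
From Stdlib Require Import List.
Import ListNotations.
Set Implicit Arguments.

Section Frames.
Variables (LO CH D : Type).

(** A (finite or infinite) sequence of labels: [t n = None] means the
    sequence has length <= n; once [None], always [None]. *)
Definition label := (CH * D)%type.
Definition lseq := nat -> option label.
Definition wf_seq (t : lseq) : Prop := forall n, t n = None -> t (S n) = None.
Definition truncate (t : lseq) (n : nat) : lseq :=
  fun k => if Nat.ltb k n then t k else None.

Definition is_endpoint (ends : CH -> option (LO * LO)) (l : LO) (c : CH) : Prop :=
  exists a b, ends c = Some (a, b) /\ (l = a \/ l = b).

End Frames.

(** A frame: locations [LO], channels [CH], data [D] (distinct types, hence
    pairwise disjoint); [ends c = Some (sender, recipient)] or [None]
    (channel with neither sender nor recipient); prefix-closed trace sets. *)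
Record frame (LO CH D : Type) := Frame {
  ends : CH -> option (LO * LO);
  traces : LO -> lseq CH D -> Prop;
  traces_wf : forall l t, traces l t -> wf_seq t;
  traces_labels : forall l t n c v, traces l t -> t n = Some (c, v) ->
                    is_endpoint ends l c;
  traces_prefix : forall l t n, traces l t -> traces l (truncate t n)
}.

(** A system of events: a set [ev] of events and a relation [le]
    (only its restriction to [ev] matters). *)
Record system (E : Type) := System {
  ev : E -> Prop;
  le : E -> E -> Prop
}.

Section Exec.
Variables (LO CH D E : Type) (F : frame LO CH D) (chan : E -> CH) (msg : E -> D).

Definition is_system (A : system E) : Prop :=
  (forall x, ev A x -> le A x x) /\
  (forall x y, ev A x -> ev A y -> le A x y -> le A y x -> x = y) /\
  (forall x y z, ev A x -> ev A y -> ev A z -> le A x y -> le A y z -> le A x z) /\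
  (forall e, ev A e -> exists s : list E, forall x, ev A x -> le A x e -> In x s).

Definition sys_eq (A B : system E) : Prop :=
  (forall e, ev A e <-> ev B e) /\
  (forall x y, ev A x -> ev A y -> (le A x y <-> le B x y)).

Definition loc_ev (A : system E) (l : LO) (e : E) : Prop :=
  ev A e /\ is_endpoint (ends F) l (chan e).

Definition npred (A : system E) (l : LO) (e : E) (n : nat) : Prop :=
  exists s : list E, NoDup s /\ length s = n /\
    forall x, In x s <-> (loc_ev A l x /\ le A x e /\ x <> e).

Definition reads (A : system E) (l : LO) (t : lseq CH D) : Prop :=
  forall n, match t n with
            | None => ~ exists e, loc_ev A l e /\ npred A l e n
            | Some lab => exists e, loc_ev A l e /\ npred A l e n /\
                                    lab = (chan e, msg e)
            end.

Definition is_exec (A : system E) : Prop :=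
  is_system A /\
  forall l,
    (forall x y, loc_ev A l x -> loc_ev A l y -> le A x y \/ le A y x) /\
    exists t, traces F l t /\ reads A l t.

Definition restrict (A : system E) (C : CH -> Prop) : system E :=
  System (fun e => ev A e /\ C (chan e)) (le A).

Definition lruns (C : CH -> Prop) (S : system E) : Prop :=
  exists A, is_exec A /\ sys_eq (restrict A C) S.

Definition Jset (C C' : CH -> Prop) (B S : system E) : Prop :=
  exists A, is_exec A /\ sys_eq (restrict A C) B /\ sys_eq (restrict A C') S.

Definition no_disclosure (C C' : CH -> Prop) : Prop :=
  forall B, lruns C B -> forall S, Jset C C' B S <-> lruns C' S.

End Exec.

Section Cut.
Variables (LO CH D : Type) (F : frame LO CH D).

Definition connects (c : CH) (l l' : LO) : Prop :=
  ends F c = Some (l, l') \/ ends F c = Some (l', l).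

Fixpoint upath (l : LO) (s : list (CH * LO)) : Prop :=
  match s with
  | [] => True
  | (c, l') :: s' => connects c l l' /\ upath l' s'
  end.

Definition end_loc (l : LO) (s : list (CH * LO)) : LO := last (map snd s) l.

Definition undirected_cut (Cs Ccut Co : CH -> Prop) : Prop :=
  (forall c, ~ (Cs c /\ Ccut c)) /\
  (forall c, ~ (Cs c /\ Co c)) /\
  (forall c, ~ (Ccut c /\ Co c)) /\
  (forall l s co cs, Co co -> is_endpoint (ends F) l co -> upath l s ->
     Cs cs -> is_endpoint (ends F) (end_loc l s) cs ->
     exists c, In c (map fst s) /\ Ccut c).

End Cut.

(* Main.v *)
Require Import Defs.
From Stdlib Require Import List Classical.
Import ListNotations.
Set Implicit Arguments.

Definition Ug {E} (Ob Sb : E -> Prop) (lo l1 : E -> E -> Prop) x c :=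
  (Ob x /\ lo x c) \/ (Sb x /\ l1 x c).
Definition Dg {E} (Ob Sb : E -> Prop) (lo l1 : E -> E -> Prop) c y :=
  (Ob y /\ lo c y) \/ (Sb y /\ l1 c y).
Definition leG {E} (Ob Sb : E -> Prop) (lo l1 : E -> E -> Prop) x y :=
  (Ob x /\ Ob y /\ lo x y) \/ (Sb x /\ Sb y /\ l1 x y) \/
  exists c, Ob c /\ Sb c /\ Ug Ob Sb lo l1 x c /\ Dg Ob Sb lo l1 c y.

Record GH {E} (Ob Sb : E -> Prop) (lo l1 : E -> E -> Prop) : Prop := {
  lo_refl : forall x, Ob x -> lo x x;
  lo_anti : forall x y, Ob x -> Ob y -> lo x y -> lo y x -> x = y;
  lo_trans : forall x y z, Ob x -> Ob y -> Ob z -> lo x y -> lo y z -> lo x z;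
  l1_refl : forall x, Sb x -> l1 x x;
  l1_anti : forall x y, Sb x -> Sb y -> l1 x y -> l1 y x -> x = y;
  l1_trans : forall x y z, Sb x -> Sb y -> Sb z -> l1 x y -> l1 y z -> l1 x z;
  agree : forall x y, Ob x -> Sb x -> Ob y -> Sb y -> (lo x y <-> l1 x y)
}.

Section G.
Context {E : Type} (Ob Sb : E -> Prop) (lo l1 : E -> E -> Prop) (H : GH Ob Sb lo l1).

Lemma ag1 x y : Ob x -> Sb x -> Ob y -> Sb y -> lo x y -> l1 x y.
Proof. intros; apply (agree H); auto. Qed.
Lemma ag2 x y : Ob x -> Sb x -> Ob y -> Sb y -> l1 x y -> lo x y.
Proof. intros; apply (agree H); auto. Qed.

Lemma leG_Ob x y : Ob x -> Ob y -> leG Ob Sb lo l1 x y -> lo x y.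
Proof.
  intros Ox Oy [[_ [_ h]]|[[Sx [Sy h]]|[c [Oc [Sc [U D]]]]]].
  - exact h.
  - apply ag2; auto.
  - destruct U as [[_ u]|[Sx u]]; destruct D as [[_ d]|[Sy d]];
    apply (lo_trans H) with c; auto; apply ag2; auto.
Qed.

Lemma leG_OS x y : Ob x -> Sb y -> leG Ob Sb lo l1 x y ->
  exists c, Ob c /\ Sb c /\ lo x c /\ l1 c y.
Proof.
  intros Ox Sy [[_ [Oy h]]|[[Sx [_ h]]|[c [Oc [Sc [U D]]]]]].
  - exists y; repeat split; auto. apply (l1_refl H); auto.
  - exists x; repeat split; auto. apply (lo_refl H); auto.
  - exists c; repeat split; auto.
    + destruct U as [[_ u]|[Sx u]]; auto. apply ag2; auto.
    + destruct D as [[Oy d]|[_ d]]; auto. apply ag1; auto.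
Qed.

Lemma U_trans x c c' : Ob c -> Sb c -> Ob c' -> Sb c' -> Ug Ob Sb lo l1 x c ->
  lo c c' -> Ug Ob Sb lo l1 x c'.
Proof.
  intros Oc Sc Oc' Sc' [[Ox u]|[Sx u]] h.
  - left; split; auto; apply (lo_trans H) with c; auto.
  - right; split; auto; apply (l1_trans H) with c; auto. apply ag1; auto.
Qed.

Lemma D_trans y c c' : Ob c -> Sb c -> Ob c' -> Sb c' -> Dg Ob Sb lo l1 c' y ->
  lo c c' -> Dg Ob Sb lo l1 c y.
Proof.
  intros Oc Sc Oc' Sc' [[Oy u]|[Sy u]] h.
  - left; split; auto; apply (lo_trans H) with c'; auto.
  - right; split; auto; apply (l1_trans H) with c'; auto. apply ag1; auto.
Qed.

Lemma DU y c c' : Ob c -> Sb c -> Ob c' -> Sb c' -> Dg Ob Sb lo l1 c y ->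
  Ug Ob Sb lo l1 y c' -> lo c c'.
Proof.
  intros Oc Sc Oc' Sc' [[Oy d]|[Sy d]] [[Oy' u]|[Sy' u]].
  - apply (lo_trans H) with y; auto.
  - apply (lo_trans H) with y; auto. apply ag2; auto.
  - apply (lo_trans H) with y; auto. apply ag2; auto.
  - apply ag2; auto. apply (l1_trans H) with y; auto.
Qed.

Lemma d1U x y c : Ob x -> Ob y -> lo x y -> Ob c -> Sb c -> Ug Ob Sb lo l1 y c ->
  Ug Ob Sb lo l1 x c.
Proof.
  intros Ox Oy h Oc Sc [[_ u]|[Sy u]]; left; split; auto;
  apply (lo_trans H) with y; auto. apply ag2; auto.
Qed.

Lemma d2U x y c : Sb x -> Sb y -> l1 x y -> Ob c -> Sb c -> Ug Ob Sb lo l1 y c ->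
  Ug Ob Sb lo l1 x c.
Proof.
  intros Ox Oy h Oc Sc [[Sy u]|[_ u]]; right; split; auto;
  apply (l1_trans H) with y; auto. apply ag1; auto.
Qed.

Lemma Dd1 x y c : Ob x -> Ob y -> lo x y -> Ob c -> Sb c -> Dg Ob Sb lo l1 c x ->
  Dg Ob Sb lo l1 c y.
Proof.
  intros Ox Oy h Oc Sc [[_ u]|[Sx u]]; left; split; auto;
  apply (lo_trans H) with x; auto. apply ag2; auto.
Qed.

Lemma Dd2 x y c : Sb x -> Sb y -> l1 x y -> Ob c -> Sb c -> Dg Ob Sb lo l1 c x ->
  Dg Ob Sb lo l1 c y.
Proof.
  intros Ox Oy h Oc Sc [[Sx u]|[_ u]]; right; split; auto;
  apply (l1_trans H) with x; auto. apply ag1; auto.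
Qed.

Lemma leG_trans x y z : leG Ob Sb lo l1 x y -> leG Ob Sb lo l1 y z -> leG Ob Sb lo l1 x z.
Proof.
  intros [[Ox [Oy h]]|[[Sx [Sy h]]|[c [Oc [Sc [U D]]]]]]
         [[Oy' [Oz h']]|[[Sy' [Sz h']]|[c' [Oc' [Sc' [U' D']]]]]].
  - left; repeat split; auto. apply (lo_trans H) with y; auto.
  - right; right; exists y; split; [|split; [|split]]; auto.
    + left; auto.
    + right; auto.
  - right; right; exists c'; split; [|split; [|split]]; auto. apply d1U with y; auto.
  - right; right; exists y; split; [|split; [|split]]; auto.
    + right; auto.
    + left; auto.
  - right; left; repeat split; auto. apply (l1_trans H) with y; auto.
  - right; right; exists c'; split; [|split; [|split]]; auto. apply d2U with y; auto.
  - right; right; exists c; split; [|split; [|split]]; auto. apply Dd1 with y; auto.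
  - right; right; exists c; split; [|split; [|split]]; auto. apply Dd2 with y; auto.
  - right; right; exists c'; split; [|split; [|split]]; auto. apply U_trans with c; auto. apply DU with y; auto.
Qed.

Lemma leG_refl x : Ob x \/ Sb x -> leG Ob Sb lo l1 x x.
Proof.
  intros [O|S]; [left|right;left]; repeat split; auto.
  apply (lo_refl H); auto. apply (l1_refl H); auto.
Qed.

End G.

Lemma GH_swap {E} (Ob Sb : E -> Prop) lo l1 : GH Ob Sb lo l1 -> GH Sb Ob l1 lo.
Proof.
  intros [a b c d e f g]; constructor; auto.
  intros; symmetry; apply g; auto.
Qed.

Lemma leG_swap {E} (Ob Sb : E -> Prop) lo l1 x y :
  leG Ob Sb lo l1 x y <-> leG Sb Ob l1 lo x y.
Proof. unfold leG, Ug, Dg; firstorder. Qed.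

Lemma leG_Sb {E} (Ob Sb : E -> Prop) lo l1 x y : GH Ob Sb lo l1 ->
  Sb x -> Sb y -> leG Ob Sb lo l1 x y -> l1 x y.
Proof.
  intros H Sx Sy h. apply leG_swap in h. eapply leG_Ob; eauto. apply GH_swap; auto.
Qed.

Lemma leG_mixed {E} (Ob Sb : E -> Prop) lo l1 x y : GH Ob Sb lo l1 ->
  Ob x -> Sb y -> leG Ob Sb lo l1 x y -> leG Ob Sb lo l1 y x -> Sb x.
Proof.
  intros H Ox Sy h1 h2.
  destruct (leG_OS H Ox Sy h1) as [c [Oc [Sc [u v]]]].
  apply leG_swap in h2.
  destruct (leG_OS (GH_swap H) Sy Ox h2) as [c' [Sc' [Oc' [u' v']]]].
  assert (l1 c c') by (apply (l1_trans H) with y; auto).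
  assert (lo c c') by (apply (agree H); auto).
  assert (lo x c') by (apply (lo_trans H) with c; auto).
  assert (x = c') by (apply (lo_anti H); auto). subst; auto.
Qed.

Lemma leG_anti {E} (Ob Sb : E -> Prop) lo l1 x y : GH Ob Sb lo l1 ->
  Ob x \/ Sb x -> Ob y \/ Sb y -> leG Ob Sb lo l1 x y -> leG Ob Sb lo l1 y x -> x = y.
Proof.
  intros H hx hy h1 h2.
  assert (SS : Sb x -> Sb y -> x = y).
  { intros; apply (l1_anti H); auto; eapply leG_Sb; eauto. }
  destruct hx as [Ox|Sx]; destruct hy as [Oy|Sy]; auto.
  - apply (lo_anti H); auto; eapply leG_Ob; eauto.
  - apply SS; auto. eapply leG_mixed; eauto.
  - apply SS; auto. eapply leG_mixed; eauto.
Qed.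

Lemma fin_ex {E} (P : E -> Prop) (r : E -> E -> Prop) :
  (forall e, P e -> exists s, forall x, P x -> r x e -> In x s) ->
  forall e, exists s, forall x, P e -> P x -> r x e -> In x s.
Proof.
  intros h e. destruct (classic (P e)) as [p|np].
  - destruct (h e p) as [s hs]; exists s; auto.
  - exists []; intros; contradiction.
Qed.

Lemma list_fin {E} (Q : E -> E -> Prop) :
  (forall c, exists s, forall x, Q c x -> In x s) ->
  forall L, exists s, forall c x, In c L -> Q c x -> In x s.
Proof.
  intros h L; induction L as [|c L [sL hL]].
  - exists []; intros c x [].
  - destruct (h c) as [sc hc]. exists (sc ++ sL).
    intros c' x [<-|i] q; apply in_or_app; eauto.
Qed.

Lemma leG_fin {E} (Ob Sb : E -> Prop) lo l1 :
  (forall e, Ob e -> exists s, forall x, Ob x -> lo x e -> In x s) ->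
  (forall e, Sb e -> exists s, forall x, Sb x -> l1 x e -> In x s) ->
  forall e, exists s, forall x, leG Ob Sb lo l1 x e -> In x s.
Proof.
  intros fo f1 e.
  destruct (@fin_ex _ _ _ fo e) as [so hso]. destruct (@fin_ex _ _ _ f1 e) as [s1 hs1].
  destruct (@list_fin _ (fun c x => Ob c /\ Sb c /\ Ug Ob Sb lo l1 x c)) with (L := so ++ s1)
    as [sL hL].
  { intros c. destruct (@fin_ex _ _ _ fo c) as [a ha]. destruct (@fin_ex _ _ _ f1 c) as [b hb].
    exists (a ++ b). intros x [Oc [Sc [[Ox u]|[Sx u]]]]; apply in_or_app; auto. }
  exists (so ++ s1 ++ sL). intros x [[Ox [Oe h]]|[[Sx [Se h]]|[c [Oc [Sc [U D]]]]]].
  - apply in_or_app; auto.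
  - apply in_or_app; right; apply in_or_app; auto.
  - apply in_or_app; right; apply in_or_app; right. apply hL with c; auto.
    destruct D as [[Oe d]|[Se d]]; apply in_or_app; auto.
Qed.

Lemma last_def {A} (x : A) r d d' : last (x :: r) d = last (x :: r) d'.
Proof. revert x; induction r as [|y r IH]; intros x; [reflexivity|]. change (last (y :: r) d = last (y :: r) d'). apply IH. Qed.

Lemma end_loc_cons {LO CH} (l l' : LO) (c : CH) s :
  end_loc l ((c, l') :: s) = end_loc l' s.
Proof. unfold end_loc; simpl. destruct (map snd s); [reflexivity|apply last_def]. Qed.

Lemma upath_app {LO CH D} (F : frame LO CH D) s l c l' :
  upath F l s -> connects F c (end_loc l s) l' -> upath F l (s ++ [(c, l')]).
Proof.
  revert l; induction s as [|[c0 l0] s IH]; intros l hp hc; simpl.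
  - split; auto.
  - destruct hp as [h1 h2]. split; auto. apply IH; auto.
    rewrite <- end_loc_cons with (c := c0) (l := l); auto.
Qed.

Lemma end_loc_app {LO CH} (l l' : LO) (c : CH) s :
  end_loc l (s ++ [(c, l')]) = l'.
Proof. unfold end_loc. rewrite map_app. simpl. apply last_last. Qed.

Definition Oloc {LO CH D} (F : frame LO CH D) (Ccut Co : CH -> Prop) (l : LO) :=
  exists l0 co s, Co co /\ is_endpoint (ends F) l0 co /\ upath F l0 s /\
    (forall c, In c (map fst s) -> ~ Ccut c) /\ end_loc l0 s = l.

Lemma Oloc_start {LO CH D} (F : frame LO CH D) Ccut Co l c :
  Co c -> is_endpoint (ends F) l c -> Oloc F Ccut Co l.
Proof. intros; exists l, c, []; simpl; repeat split; auto; intros ? []. Qed.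

Lemma Oloc_step {LO CH D} (F : frame LO CH D) Ccut Co l c l' :
  Oloc F Ccut Co l -> connects F c l l' -> ~ Ccut c -> Oloc F Ccut Co l'.
Proof.
  intros [l0 [co [s [h1 [h2 [h3 [h4 h5]]]]]]] hc hn.
  exists l0, co, (s ++ [(c, l')]); repeat split; auto.
  - apply upath_app; subst; auto.
  - rewrite map_app; simpl. intros c' hi. apply in_app_or in hi as [hi|[<-|[]]]; auto.
  - apply end_loc_app.
Qed.

Lemma ends_other {LO CH D} (F : frame LO CH D) l l' c :
  is_endpoint (ends F) l c -> is_endpoint (ends F) l' c -> l = l' \/ connects F c l l'.
Proof.
  intros [a [b [e1 h1]]] [a' [b' [e2 h2]]]. rewrite e1 in e2. injection e2; intros; subst.
  unfold connects. destruct h1 as [->| ->]; destruct h2 as [->| ->]; auto.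
Qed.

Lemma Oloc_close {LO CH D} (F : frame LO CH D) Ccut Co l l' c :
  Oloc F Ccut Co l -> is_endpoint (ends F) l c -> is_endpoint (ends F) l' c -> ~ Ccut c ->
  Oloc F Ccut Co l'.
Proof.
  intros ho h1 h2 hn. destruct (ends_other F h1 h2) as [<-|hc]; auto.
  eapply Oloc_step; eauto.
Qed.

Lemma Oloc_Cs {LO CH D} (F : frame LO CH D) Cs Ccut Co l c :
  undirected_cut F Cs Ccut Co -> Oloc F Ccut Co l -> Cs c -> is_endpoint (ends F) l c -> False.
Proof.
  intros [_ [_ [_ hcut]]] [l0 [co [s [h1 [h2 [h3 [h4 h5]]]]]]] hc he.
  subst. destruct (hcut l0 s co c h1 h2 h3 hc he) as [c' [hi hk]]. eapply h4; eauto.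
Qed.

Section Ex.
Context {LO CH D E : Type} (F : frame LO CH D) (chan : E -> CH) (msg : E -> D).

Lemma reads_transfer (A A' : system E) l t :
  (forall e, loc_ev F chan A l e <-> loc_ev F chan A' l e) ->
  (forall x y, loc_ev F chan A l x -> loc_ev F chan A l y -> (le A x y <-> le A' x y)) ->
  reads F chan msg A' l t -> reads F chan msg A l t.
Proof.
  intros hev hle hr.
  assert (hp : forall e x, loc_ev F chan A l e ->
    (loc_ev F chan A l x /\ le A x e /\ x <> e) <-> (loc_ev F chan A' l x /\ le A' x e /\ x <> e)).
  { intros e x he. split; intros [hx [hxe hne]]; split; [apply hev; auto| |apply hev; auto|].
    - split; auto. apply hle; auto.
    - assert (hx' : loc_ev F chan A l x) by (apply hev; auto). split; auto. apply hle; auto. }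
  assert (hn : forall e n, loc_ev F chan A l e -> (npred F chan A l e n <-> npred F chan A' l e n)).
  { intros e n he. unfold npred. split; intros [s [h1 [h2 h3]]]; exists s; split; auto; split; auto;
      intros x; split; intros hx.
    - apply hp; auto; apply h3; auto.
    - apply h3; apply hp; auto.
    - apply hp; auto; apply h3; auto.
    - apply h3; apply hp; auto. }
  intros n. specialize (hr n). destruct (t n) as [lab|].
  - destruct hr as [e [he [hnp hl]]]. assert (he' : loc_ev F chan A l e) by (apply hev; auto).
    exists e; split; [auto|split; [apply hn; auto|auto]].
  - intros [e [he hnp]]. apply hr. exists e; split; [apply hev; auto|apply hn; auto].
Qed.
End Ex.
Unset Implicit Arguments.

Theorem theorem1 (LO CH D E : Type) (F : frame LO CH D)
  (chan : E -> CH) (msg : E -> D) (Cs Ccut Co : CH -> Prop) :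
  undirected_cut F Cs Ccut Co ->
  no_disclosure F chan msg Cs Ccut ->
  no_disclosure F chan msg Cs Co.
Proof.
  intros Hcut ND B HB S. split.
  { intros [A [hA [_ hS]]]. exists A; auto. }
  intros [Ao [hAo hSo]].
  assert (hK : lruns F chan msg Ccut (restrict chan Ao Ccut)).
  { exists Ao; split; auto; split; intros; reflexivity. }
  destruct (proj2 (ND B HB _) hK) as [A1 [hA1 [hB1 hK1]]].
  destruct hK1 as [k1 k2]; simpl in k1, k2.
  assert (HKev : forall e, Ccut (chan e) -> (ev Ao e <-> ev A1 e)).
  { intros e hc; split; intros h; apply k1; auto; split; auto. }
  assert (HKle : forall x y, Ccut (chan x) -> Ccut (chan y) -> ev A1 x -> ev A1 y ->
                   (le A1 x y <-> le Ao x y)).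
  { intros x y hx hy ex ey. apply k2; split; auto. }
  destruct Hcut as [d1 [d2 [d3 hc]]].
  pose (Oc := fun c => ~ Ccut c /\ (Co c \/ exists l, Oloc F Ccut Co l /\ is_endpoint (ends F) l c)).
  pose (Ob := fun x => ev Ao x /\ (Ccut (chan x) \/ Oc (chan x))).
  pose (Sb := fun x => ev A1 x /\ ~ Oc (chan x)).
  assert (OSK : forall x, Ob x -> Sb x -> Ccut (chan x)).
  { intros x [_ [h|h]] [_ h']; auto; contradiction. }
  assert (CsS : forall c, Cs c -> ~ Ccut c /\ ~ Oc c).
  { intros c h; split; [intros h'; apply (d1 c); auto|].
    intros [_ [h'|[l [hl he]]]]; [apply (d2 c); auto|].
    eapply Oloc_Cs; [exact (conj d1 (conj d2 (conj d3 hc)))|exact hl|exact h|exact he]. }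
  assert (CoO : forall c, Co c -> Oc c).
  { intros c h; split; auto. intros h'; apply (d3 c); auto. }
  assert (notO : forall l c, ~ Oloc F Ccut Co l -> is_endpoint (ends F) l c -> ~ Oc c).
  { intros l c hl he [hn [h|[l' [hl' he']]]].
    - apply hl; eapply Oloc_start; eauto.
    - apply hl; eapply Oloc_close; eauto. }
  assert (inO : forall l c, Oloc F Ccut Co l -> is_endpoint (ends F) l c -> Ccut c \/ Oc c).
  { intros l c hl he. destruct (classic (Ccut c)); auto. right; split; eauto. }
  destruct hAo as [[ro [ano [tro fio]]] hlo].
  destruct hA1 as [[r1 [an1 [tr1 fi1]]] hl1].
  assert (GHi : GH Ob Sb (le Ao) (le A1)).
  { constructor.
    - intros x [h _]; auto.
    - intros x y [h _] [h' _]; auto.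
    - intros x y z [h _] [h' _] [h'' _]; eauto.
    - intros x [h _]; auto.
    - intros x y [h _] [h' _]; auto.
    - intros x y z [h _] [h' _] [h'' _]; eauto.
    - intros x y ox sx oy sy. symmetry. apply HKle; auto; try apply OSK; auto.
      destruct sx; auto. destruct sy; auto. }
  exists (System (fun e => Ob e \/ Sb e) (leG Ob Sb (le Ao) (le A1))).
  split; [|split].
  - split.
    + split; [|split; [|split]]; simpl.
      * intros x hx; apply leG_refl; auto.
      * intros x y hx hy; apply leG_anti; auto.
      * intros x y z _ _ _; apply leG_trans; auto.
      * intros e _. destruct (@leG_fin _ Ob Sb (le Ao) (le A1)) with (e := e) as [s hs].
        { intros e' [h _]. destruct (fio e' h) as [s hs]. exists s. intros x [hx _]; auto. }
        { intros e' [h _]. destruct (fi1 e' h) as [s hs]. exists s. intros x [hx _]; auto. }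
        exists s; auto.
    + intros l. destruct (classic (Oloc F Ccut Co l)) as [hO|hO].
      * assert (hev : forall e, loc_ev F chan (System (fun e => Ob e \/ Sb e) (leG Ob Sb (le Ao) (le A1))) l e
                         <-> loc_ev F chan Ao l e).
        { intros e; unfold loc_ev; simpl; split.
          - intros [[[h _]|[h h']] he]; split; auto.
            destruct (inO l _ hO he) as [hc'|hc']; [apply HKev; auto|contradiction].
          - intros [h he]; split; auto. left; split; auto. eapply inO; eauto. }
        assert (hob : forall e, loc_ev F chan Ao l e -> Ob e).
        { intros e [h he]; split; auto. eapply inO; eauto. }
        destruct (hlo l) as [lin [t [ht hr]]]. split.
        -- intros x y hx hy. apply hev in hx; apply hev in hy.
           destruct (lin x y hx hy); [left|right]; left; (split; [apply hob; auto|split; [apply hob; auto|auto]]).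
        -- exists t; split; auto. apply reads_transfer with Ao; auto.
           intros x y hx hy. apply hev in hx; apply hev in hy. simpl. split.
           ++ apply leG_Ob; auto.
           ++ intros; left; split; [apply hob; auto|split; [apply hob; auto|auto]].
      * assert (hev : forall e, loc_ev F chan (System (fun e => Ob e \/ Sb e) (leG Ob Sb (le Ao) (le A1))) l e
                         <-> loc_ev F chan A1 l e).
        { intros e; unfold loc_ev; simpl; split.
          - intros [[[h h']|[h _]] he]; split; auto.
            destruct h' as [hc'|hc']; [apply HKev; auto|]. exfalso; eapply notO; eauto.
          - intros [h he]; split; auto. right; split; auto. eapply notO; eauto. }
        assert (hsb : forall e, loc_ev F chan A1 l e -> Sb e).
        { intros e [h he]; split; auto. eapply notO; eauto. }
        destruct (hl1 l) as [lin [t [ht hr]]]. split.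
        -- intros x y hx hy. apply hev in hx; apply hev in hy.
           destruct (lin x y hx hy); [left|right]; right; left; (split; [apply hsb; auto|split; [apply hsb; auto|auto]]).
        -- exists t; split; auto. apply reads_transfer with A1; auto.
           intros x y hx hy. apply hev in hx; apply hev in hy. simpl. split.
           ++ apply leG_Sb; auto.
           ++ intros; right; left; split; [apply hsb; auto|split; [apply hsb; auto|auto]].
  - destruct hB1 as [b1 b2]; simpl in b1, b2. split; simpl.
    + intros e. rewrite <- b1. split.
      * intros [[[h [h'|h']]|[h _]] hc']; split; auto; destruct (CsS _ hc'); contradiction.
      * intros [h hc']; split; auto. right; split; auto. apply CsS; auto.
    + intros x y [hx cx] [hy cy].
      assert (Sx : Sb x) by (destruct hx as [[h [h'|h']]|h]; auto; destruct (CsS _ cx); contradiction).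
      assert (Sy : Sb y) by (destruct hy as [[h [h'|h']]|h]; auto; destruct (CsS _ cy); contradiction).
      rewrite <- (b2 x y (conj (proj1 Sx) cx) (conj (proj1 Sy) cy)). split.
      * apply leG_Sb; auto.
      * intros; right; left; split; [auto|split; auto].
  - destruct hSo as [b1 b2]; simpl in b1, b2. split; simpl.
    + intros e. rewrite <- b1. split.
      * intros [[[h _]|[h h']] hc']; split; auto; exfalso; apply h'; apply CoO; auto.
      * intros [h hc']; split; auto. left; split; auto; try (right; apply CoO; auto).
    + intros x y [hx cx] [hy cy].
      assert (Sx : Ob x) by (destruct hx as [h|[h h']]; auto; exfalso; apply h'; apply CoO; auto).
      assert (Sy : Ob y) by (destruct hy as [h|[h h']]; auto; exfalso; apply h'; apply CoO; auto).
      rewrite <- (b2 x y (conj (proj1 Sx) cx) (conj (proj1 Sy) cy)). split.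
      * apply leG_Ob; auto.
      * intros; left; split; [auto|split; auto].
Qed.
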